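(* For the modified EnvZ/OmpR network described in the context and any positive rate constants $k_1,\dots,k_{16}$, at every positive steady state \[[\mathrm{OmpR\text{-}P}]<\frac{k_1}{k_2}\cdot\frac{k_3k_5}{k_4+k_5}\cdot\frac{k_{14}+k_{15}}{k_{13}k_{15}}\quad\text{and}\quad[\mathrm{OmpR\text{-}P}]<k_5\,\frac{k_{11}+k_{12}}{k_{10}k_{12}}.\]
   Context: The modified EnvZ/OmpR network has mass-action kinetics and reactions $\mathrm{EnvZ\text{-}ADP}\underset{k_2}{\overset{k_1}{\rightleftharpoons}}\mathrm{EnvZ}\underset{k_4}{\overset{k_3}{\rightleftharpoons}}\mathrm{EnvZ\text{-}ATP}\xrightarrow{k_5}\mathrm{EnvZ\text{-}P}$; $\mathrm{EnvZ\text{-}P}+\mathrm{OmpR}\underset{k_7}{\overset{k_6}{\rightleftharpoons}}\mathrm{EnvZ\text{-}P\text{-}OmpR}\underset{k_9}{\overset{k_8}{\rightleftharpoons}}\mathrm{EnvZ}+\mathrm{OmpR\text{-}P}$; $\mathrm{EnvZ\text{-}ATP}+\mathrm{OmpR\text{-}P}\underset{k_{11}}{\overset{k_{10}}{\rightleftharpoons}}\mathrm{EnvZ\text{-}ATP\text{-}OmpR\text{-}P}\xrightarrow{k_{12}}\mathrm{EnvZ\text{-}ATP}+\mathrm{OmpR}$; $\mathrm{EnvZ\text{-}ADP}+\mathrm{OmpR\text{-}P}\underset{k_{14}}{\overset{k_{13}}{\rightleftharpoons}}\mathrm{EnvZ\text{-}ADP\text{-}OmpR\text{-}P}\xrightarrow{k_{15}}\mathrm{EnvZ\text{-}ADP}+\mathrm{OmpR}$;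 $\mathrm{OmpR\text{-}P}\xrightarrow{k_{16}}\mathrm{OmpR}$ (here $A\underset{k'}{\overset{k}{\rightleftharpoons}}B$ means $A\xrightarrow{k}B$ and $B\xrightarrow{k'}A$; hyphenated names are single species). Square brackets denote concentrations; a positive steady state is a vector of positive concentrations of all nine species at which all mass-action rates of change vanish. *)

(* Defs.v *)
From Stdlib Require Import Reals.
Open Scope R_scope.

Record state := mkState {
  XD : R;    (* [EnvZ-ADP] *)
  X : R;     (* [EnvZ] *)
  XT : R;    (* [EnvZ-ATP] *)
  XP : R;    (* [EnvZ-P] *)
  Y : R;     (* [OmpR] *)
  XPY : R;   (* [EnvZ-P-OmpR] *)
  YP : R;    (* [OmpR-P] *)
  XTYP : R;  (* [EnvZ-ATP-OmpR-P] *)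
  XDYP : R   (* [EnvZ-ADP-OmpR-P] *)
}.

(* Rate constants k 1, ..., k 16 (indices outside 1..16 are irrelevant). *)
Definition rates := nat -> R.

Definition positive_rates (k : rates) : Prop :=
  forall i, (1 <= i <= 16)%nat -> 0 < k i.

Definition positive_state (s : state) : Prop :=
  0 < XD s /\ 0 < X s /\ 0 < XT s /\ 0 < XP s /\ 0 < Y s /\
  0 < XPY s /\ 0 < YP s /\ 0 < XTYP s /\ 0 < XDYP s.

Definition dXD (k : rates) (s : state) : R :=
  - k 1%nat * XD s + k 2%nat * X s - k 13%nat * XD s * YP s
  + k 14%nat * XDYP s + k 15%nat * XDYP s.
Definition dX (k : rates) (s : state) : R :=
  k 1%nat * XD s - k 2%nat * X s - k 3%nat * X s + k 4%nat * XT s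
  + k 8%nat * XPY s - k 9%nat * X s * YP s.
Definition dXT (k : rates) (s : state) : R :=
  k 3%nat * X s - k 4%nat * XT s - k 5%nat * XT s
  - k 10%nat * XT s * YP s + k 11%nat * XTYP s + k 12%nat * XTYP s.
Definition dXP (k : rates) (s : state) : R :=
  k 5%nat * XT s - k 6%nat * XP s * Y s + k 7%nat * XPY s.
Definition dY (k : rates) (s : state) : R :=
  - k 6%nat * XP s * Y s + k 7%nat * XPY s + k 12%nat * XTYP s
  + k 15%nat * XDYP s + k 16%nat * YP s.
Definition dXPY (k : rates) (s : state) : R :=
  k 6%nat * XP s * Y s - k 7%nat * XPY s - k 8%nat * XPY s
  + k 9%nat * X s * YP s.
Definition dYP (k : rates) (s : state) : R :=
  k 8%nat * XPY s - k 9%nat * X s * YP s - k 10%nat * XT s * YP s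
  + k 11%nat * XTYP s - k 13%nat * XD s * YP s + k 14%nat * XDYP s
  - k 16%nat * YP s.
Definition dXTYP (k : rates) (s : state) : R :=
  k 10%nat * XT s * YP s - k 11%nat * XTYP s - k 12%nat * XTYP s.
Definition dXDYP (k : rates) (s : state) : R :=
  k 13%nat * XD s * YP s - k 14%nat * XDYP s - k 15%nat * XDYP s.

Definition steady_state (k : rates) (s : state) : Prop :=
  dXD k s = 0 /\ dX k s = 0 /\ dXT k s = 0 /\ dXP k s = 0 /\ dY k s = 0 /\
  dXPY k s = 0 /\ dYP k s = 0 /\ dXTYP k s = 0 /\ dXDYP k s = 0.

Definition positive_steady_state (k : rates) (s : state) : Prop :=
  positive_state s /\ steady_state k s.

(* Main.v *)
Require Import Defs.
From Stdlib Require Import Reals Lra Psatz.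
Open Scope R_scope.

Theorem mainTheorem9 (k : rates) (s : state) :
  positive_rates k -> positive_steady_state k s ->
  YP s < (k 1%nat / k 2%nat) * (k 3%nat * k 5%nat / (k 4%nat + k 5%nat))
           * ((k 14%nat + k 15%nat) / (k 13%nat * k 15%nat))
  /\ YP s < k 5%nat * ((k 11%nat + k 12%nat) / (k 10%nat * k 12%nat)).
Proof.
  intros Hk [[h1 [h2 [h3 [h4 [h5 [h6 [h7 [h8 h9]]]]]]]]
             [e1 [e2 [e3 [e4 [e5 [e6 [e7 [e8 e9]]]]]]]]].
  unfold dXD, dX, dXT, dXP, dY, dXPY, dYP, dXTYP, dXDYP in *.
  assert (K : forall i, (1 <= i <= 16)%nat -> 0 < k i) by exact Hk.
  pose proof (K 1%nat ltac:(lia)) as k1. pose proof (K 2%nat ltac:(lia)) as k2.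
  pose proof (K 3%nat ltac:(lia)) as k3. pose proof (K 4%nat ltac:(lia)) as k4.
  pose proof (K 5%nat ltac:(lia)) as k5. pose proof (K 10%nat ltac:(lia)) as k10.
  pose proof (K 11%nat ltac:(lia)) as k11. pose proof (K 12%nat ltac:(lia)) as k12.
  pose proof (K 13%nat ltac:(lia)) as k13. pose proof (K 14%nat ltac:(lia)) as k14.
  pose proof (K 15%nat ltac:(lia)) as k15. pose proof (K 16%nat ltac:(lia)) as k16.
  set (a1 := k 1%nat) in *. set (a2 := k 2%nat) in *. set (a3 := k 3%nat) in *.
  set (a4 := k 4%nat) in *. set (a5 := k 5%nat) in *. set (a6 := k 6%nat) in *.
  set (a7 := k 7%nat) in *. set (a8 := k 8%nat) in *. set (a9 := k 9%nat) in *.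
  set (a10 := k 10%nat) in *. set (a11 := k 11%nat) in *. set (a12 := k 12%nat) in *.
  set (a13 := k 13%nat) in *. set (a14 := k 14%nat) in *. set (a15 := k 15%nat) in *.
  set (a16 := k 16%nat) in *.
  assert (F : a5 * XT s = a12 * XTYP s + a15 * XDYP s + a16 * YP s) by lra.
  assert (G1 : a15 * XDYP s < a5 * XT s) by nra.
  assert (G2 : a12 * XTYP s < a5 * XT s) by nra.
  assert (T : (a4 + a5) * XT s = a3 * X s) by lra.
  assert (D : a2 * X s = a1 * XD s) by lra.
  split.
  - assert (P : a13 * a15 * a2 * (a4 + a5) * YP s * XD s <
                (a14 + a15) * a5 * a1 * a3 * XD s).
    { assert (E : a13 * YP s * XD s = (a14 + a15) * XDYP s) by lra.
      assert (E2 : a2 * (a4 + a5) * XT s = a1 * a3 * XD s).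
      { rewrite Rmult_assoc, T. replace (a2 * (a3 * X s)) with (a3 * (a2 * X s)) by ring. rewrite D. ring. }
      replace (a13 * a15 * a2 * (a4 + a5) * YP s * XD s)
        with (a15 * a2 * (a4 + a5) * (a13 * YP s * XD s)) by ring.
      rewrite E.
      replace ((a14 + a15) * a5 * a1 * a3 * XD s)
        with ((a14 + a15) * a5 * (a1 * a3 * XD s)) by ring.
      rewrite <- E2.
      replace (a15 * a2 * (a4 + a5) * ((a14 + a15) * XDYP s))
        with ((a14 + a15) * (a2 * (a4 + a5)) * (a15 * XDYP s)) by ring.
      replace ((a14 + a15) * a5 * (a2 * (a4 + a5) * XT s))
        with ((a14 + a15) * (a2 * (a4 + a5)) * (a5 * XT s)) by ring.
      apply Rmult_lt_compat_l; [apply Rmult_lt_0_compat; [lra|apply Rmult_lt_0_compat; lra]|exact G1]. }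
    assert (P2 : a13 * a15 * a2 * (a4 + a5) * YP s < (a14 + a15) * a5 * a1 * a3).
    { apply (Rmult_lt_reg_r (XD s)); [lra|]. lra. }
    apply (Rmult_lt_reg_r (a13 * a15 * a2 * (a4 + a5))); [repeat apply Rmult_lt_0_compat; lra|].
    replace (a1 / a2 * (a3 * a5 / (a4 + a5)) * ((a14 + a15) / (a13 * a15)) *
             (a13 * a15 * a2 * (a4 + a5))) with ((a14 + a15) * a5 * a1 * a3)
      by (field; lra).
    lra.
  - assert (P : a10 * a12 * YP s * XT s < a5 * (a11 + a12) * XT s).
    { assert (E : a10 * XT s * YP s = (a11 + a12) * XTYP s) by lra.
      replace (a10 * a12 * YP s * XT s) with (a12 * (a10 * XT s * YP s)) by ring.
      rewrite E.
      replace (a12 * ((a11 + a12) * XTYP s)) with ((a11 + a12) * (a12 * XTYP s)) by ring.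
      replace (a5 * (a11 + a12) * XT s) with ((a11 + a12) * (a5 * XT s)) by ring.
      apply Rmult_lt_compat_l; [lra|exact G2]. }
    assert (P2 : a10 * a12 * YP s < a5 * (a11 + a12)).
    { apply (Rmult_lt_reg_r (XT s)); [lra|]. lra. }
    apply (Rmult_lt_reg_r (a10 * a12)); [apply Rmult_lt_0_compat; lra|].
    replace (a5 * ((a11 + a12) / (a10 * a12)) * (a10 * a12)) with (a5 * (a11 + a12))
      by (field; lra).
    lra.
Qed.
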